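(* Let $(\Omega,S)$ be an equivalenced scheme, $\alpha_0\in\Omega$, and let $u,v\in S^\#$ satisfy condition (A): for all $w,w'\in D(u,v)$, $$\bigcap_{a\in\{u,v\},\ b\in\{w,w'\}} D(a,b)\neq\emptyset.$$ Then for every $w\in D(u,v)$ the set $S_{\alpha_0}(u,v;w)$ is a partition of $\alpha_0u\times\alpha_0v$, and $S_{\alpha_0}(u,v;w)=S_{\alpha_0}(u,v;w')$ for all $w,w'\in D(u,v)$.
   Context: A coherent configuration is a pair $(\Omega,S)$ with $\Omega$ finite and $S$ a partition of $\Omega\times\Omega$ such that the diagonal $1_\Omega$ is a union of elements of $S$, $S$ is closed under $r\mapsto r^*=\{(\beta,\alpha):(\alpha,\beta)\in r\}$, and for $r,s,t\in S$ the number $c_{rs}^t=|\{\beta:(\alpha,\beta)\in r,(\beta,\gamma)\in s\}|$ does not depend on $(\alpha,\gamma)\in t$. A scheme is one with $1_\Omega\in S$; $S^\#=S\setminus\{1_\Omega\}$; $\alpha s=\{\beta:(\alpha,\beta)\in s\}$ and $n_s=|\alpha s|$; the scheme is equivalenced if all $n_s$, $s\in S^\#$, are equal. For relations $r,s\subseteq\Omega\times\Omega$, $r\cdot s=\{(\alpha,\gamma):\exists\beta,(\alpha,\beta)\in r,(\beta,\gamma)\in s\}$; for sets $X,Y$ of relations, $X\cdot Y=\{x\cdot y:x\in X,y\in Y\}$. For $r,s\in S$, $rs$ is the set of elements of $S$ contained in $r\cdot s$, and for $X,Y\subseteq S$, $XY=\bigcup_{x\in X,y\in Y}xy$. Splitting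 set: $D(u,v)=\{w\in S^\#:\ ((uu^* )(vv^* ))\cap ww^*=\{1_\Omega\}\}$ for $u,v\in S^\#$. For $u,v\in S$: $S_{\alpha_0}(u,v)=\{s\cap(\alpha_0u\times\alpha_0v):\ s\in u^*v\}$, and for $w\in S$: $S_{\alpha_0}(u,v;w)=S_{\alpha_0}(u,w)\cdot S_{\alpha_0}(w,v)$. *)

(* Defs.v *)
From mathcomp Require Import all_boot.
Set Implicit Arguments. Unset Strict Implicit. Unset Printing Implicit Defensive.

Section CC.
Variable T : finType.

Definition crel := {set T * T}.

Definition diagr : crel := [set p | p.1 == p.2].

Definition trr (r : crel) : crel := [set p | (p.2, p.1) \in r].

Definition compr (r s : crel) : crel :=
  [set p | [exists b, ((p.1, b) \in r) && ((b, p.2) \in s)]].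

Definition nbhd (a : T) (s : crel) : {set T} := [set b | (a, b) \in s].

Definition interset (r s : crel) (a c : T) : {set T} :=
  [set b | ((a, b) \in r) && ((b, c) \in s)].

Definition coherent_configuration (S : {set crel}) : Prop :=
  [/\ partition S [set: T * T],
      (exists2 X : {set crel}, X \subset S & cover X = diagr),
      (forall r, r \in S -> trr r \in S) &
      (forall r s t, r \in S -> s \in S -> t \in S ->
         forall a c a' c', (a, c) \in t -> (a', c') \in t ->
           #|interset r s a c| = #|interset r s a' c'|)].

Definition is_scheme (S : {set crel}) : Prop :=
  coherent_configuration S /\ diagr \in S.

Definition Ssharp (S : {set crel}) : {set crel} := S :\ diagr.

Definition equivalenced (S : {set crel}) : Prop :=
  forall s s', s \in Ssharp S -> s' \in Ssharp S ->
    forall a a', #|nbhd a s| = #|nbhd a' s'|.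

Definition prodS (S : {set crel}) (r s : crel) : {set crel} :=
  [set t in S | t \subset compr r s].

Definition prodSS (S : {set crel}) (X Y : {set crel}) : {set crel} :=
  \bigcup_(x in X) \bigcup_(y in Y) prodS S x y.

Definition Dsplit (S : {set crel}) (u v : crel) : {set crel} :=
  [set w in Ssharp S |
     prodSS S (prodS S u (trr u)) (prodS S v (trr v)) :&: prodS S w (trr w)
       == [set diagr]].

Definition Sloc (S : {set crel}) (a0 : T) (u v : crel) : {set crel} :=
  [set s :&: setX (nbhd a0 u) (nbhd a0 v) | s in prodS S (trr u) v].

Definition Sloc3 (S : {set crel}) (a0 : T) (u v w : crel) : {set crel} :=
  [set compr x y | x in Sloc S a0 u w, y in Sloc S a0 w v].

End CC.

(* Main.v *)
Require Import Defs.
From mathcomp Require Import all_boot.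
Set Implicit Arguments. Unset Strict Implicit. Unset Printing Implicit Defensive.

Lemma dcount (T : finType) (A B : {set T}) (R : T -> T -> bool) :
  \sum_(a in A) #|[set e in B | R a e]| = \sum_(e in B) #|[set a in A | R a e]|.
Proof.
have H1 a : #|[set e in B | R a e]| = \sum_(e in B) (R a e : nat).
  rewrite -sum1_card big_mkcond /= [RHS]big_mkcond /=; apply: eq_bigr => e _.
  by rewrite !inE; case: (e \in B); case: (R a e).
have H2 e : #|[set a in A | R a e]| = \sum_(a in A) (R a e : nat).
  rewrite -sum1_card big_mkcond /= [RHS]big_mkcond /=; apply: eq_bigr => a _.
  by rewrite !inE; case: (a \in A); case: (R a e).
under eq_bigr do rewrite H1.
under [RHS]eq_bigr do rewrite H2.
exact: exchange_big.
Qed.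

Section Pf.
Variable T : finType.
Variable S : {set {set T * T}}.
Hypothesis Hpart : partition S [set: T * T].
Hypothesis Htr : forall r, r \in S -> trr r \in S.
Hypothesis Hcoh : forall r s t, r \in S -> s \in S -> t \in S ->
         forall a c a' c', (a, c) \in t -> (a', c') \in t ->
           #|interset r s a c| = #|interset r s a' c'|.
Hypothesis Heq : equivalenced S.

Lemma cls (p : T * T) : exists2 t, t \in S & p \in t.
Proof.
case/and3P: Hpart => /eqP Hc _ _.
have : p \in cover S by rewrite Hc inE.
by case/bigcupP => t Ht Hp; exists t.
Qed.

Lemma cls_uniq (t t' : {set T * T}) (p : T * T) : t \in S -> t' \in S -> p \in t -> p \in t' -> t = t'.
Proof.
move=> Ht Ht' Hp Hp'; case/and3P: Hpart => _ Htriv _.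
apply/eqP; apply/negPn/negP => Hne.
have := (trivIsetP Htriv) t t' Ht Ht' Hne.
by move/disjointFr => /(_ p Hp); rewrite Hp'.
Qed.

Lemma S_ne (t : {set T * T}) : t \in S -> exists p, p \in t.
Proof.
move=> Ht; case/and3P: Hpart => _ _ H0.
apply/set0Pn; apply: contraNneq H0 => <-; exact: Ht.
Qed.

Lemma intE (r s : {set T * T}) (a b c : T) : (b \in interset r s a c) = ((a, b) \in r) && ((b, c) \in s).
Proof. by rewrite inE. Qed.

Lemma comprE (r s : {set T * T}) (x y : T) : ((x, y) \in compr r s) = [exists b, ((x, b) \in r) && ((b, y) \in s)].
Proof. by rewrite inE. Qed.

Lemma trrE (r : {set T * T}) (x y : T) : ((x, y) \in trr r) = ((y, x) \in r).
Proof. by rewrite inE. Qed.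

Lemma coh_ne (r s t : {set T * T}) (a c a' c' b : T) : r \in S -> s \in S -> t \in S ->
  (a, c) \in t -> (a', c') \in t -> b \in interset r s a c ->
  exists b', b' \in interset r s a' c'.
Proof.
move=> Hr Hs Ht H1 H2 Hb; apply/set0Pn; rewrite -card_gt0.
rewrite -(Hcoh Hr Hs Ht H1 H2) card_gt0; apply/set0Pn; by exists b.
Qed.

Lemma sub_compr (r s t : {set T * T}) (x y : T) : r \in S -> s \in S -> t \in S -> (x, y) \in t ->
  (x, y) \in compr r s -> t \subset compr r s.
Proof.
move=> Hr Hs Ht Hxy; rewrite comprE => /existsP [b Hb].
apply/subsetP => [[x' y']] H'.
have Hb0 : b \in interset r s x y by rewrite intE.
have [b' Hb'] := coh_ne Hr Hs Ht Hxy H' Hb0.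
rewrite comprE; apply/existsP; exists b'; by rewrite -intE.
Qed.

Definition Pair (x y : {set T * T}) := forall p q e1 e2, (p, e1) \in x -> (q, e1) \in x ->
  (p, e2) \in y -> (q, e2) \in y -> p = q.
Definition NoTri (x y c : {set T * T}) := forall p m q e1 e2 e3,
  (p, e1) \in x -> (m, e1) \in x -> (m, e2) \in y -> (q, e2) \in y ->
  (p, e3) \in c -> (q, e3) \in c -> p = q.

Lemma sharpS (x : {set T * T}) : x \in Ssharp S -> x \in S.
Proof. by rewrite inE => /andP[]. Qed.

Lemma D_NoTri (u v w : {set T * T}) : u \in S -> v \in S -> w \in Dsplit S u v -> NoTri u v w.
Proof.
move=> Hu Hv; rewrite inE => /andP [Hw /eqP HD].
have Hw' := sharpS Hw.
move=> p m q e1 e2 e3 H1 H2 H3 H4 H5 H6.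
have [t1 Ht1 Hp1] := cls (p, m).
have [t2 Ht2 Hp2] := cls (m, q).
have [t3 Ht3 Hp3] := cls (p, q).
have M1 : t1 \in prodS S u (trr u).
  rewrite inE Ht1 /=; apply: (sub_compr Hu (Htr Hu) Ht1 Hp1).
  rewrite comprE; apply/existsP; exists e1; by rewrite H1 trrE H2.
have M2 : t2 \in prodS S v (trr v).
  rewrite inE Ht2 /=; apply: (sub_compr Hv (Htr Hv) Ht2 Hp2).
  rewrite comprE; apply/existsP; exists e2; by rewrite H3 trrE H4.
have M3 : t3 \in prodS S w (trr w).
  rewrite inE Ht3 /=; apply: (sub_compr Hw' (Htr Hw') Ht3 Hp3).
  rewrite comprE; apply/existsP; exists e3; by rewrite H5 trrE H6.
have M4 : t3 \in prodS S t1 t2.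
  rewrite inE Ht3 /=; apply: (sub_compr Ht1 Ht2 Ht3 Hp3).
  rewrite comprE; apply/existsP; exists m; by rewrite Hp1 Hp2.
have : t3 \in prodSS S (prodS S u (trr u)) (prodS S v (trr v)) :&: prodS S w (trr w).
  rewrite inE M3 andbT; apply/bigcupP; exists t1 => //; apply/bigcupP; by exists t2.
rewrite HD inE => /eqP E; move: Hp3; rewrite E inE /=; by move/eqP.
Qed.

Lemma rows (x : {set T * T}) : x \in Ssharp S -> forall p, exists e, (p, e) \in x.
Proof.
move=> Hx p; have [[c d] Hcd] := S_ne (sharpS Hx).
have := Heq Hx Hx c p.
have : 0 < #|nbhd c x| by rewrite card_gt0; apply/set0Pn; exists d; rewrite inE.
move=> H0 E; rewrite E card_gt0 in H0; case/set0Pn: H0 => e; rewrite inE => He.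
by exists e.
Qed.

Lemma NoTri_sym (x y c : {set T * T}) : NoTri x y c -> NoTri y x c.
Proof.
move=> H p m q e1 e2 e3 H1 H2 H3 H4 H5 H6.
by symmetry; apply: (H q m p e2 e1 e3).
Qed.

Lemma NoTri_Pair1 (x y c : {set T * T}) : y \in Ssharp S -> NoTri x y c -> Pair x c.
Proof.
move=> Hy H p q e1 e2 H1 H2 H3 H4; have [e He] := rows Hy q.
exact: (H p q q e1 e e2).
Qed.

Lemma NoTri_Pair2 (x y c : {set T * T}) : x \in Ssharp S -> NoTri x y c -> Pair y c.
Proof.
move=> Hx H p q e1 e2 H1 H2 H3 H4; have [e He] := rows Hx p.
exact: (H p p q e e1 e2).
Qed.

Lemma Pair_sym (x y : {set T * T}) : Pair x y -> Pair y x.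
Proof. move=> H p q e1 e2 H1 H2 H3 H4; exact: (H p q e2 e1). Qed.


Lemma trr_sharp (x : {set T * T}) : x \in Ssharp S -> trr x \in Ssharp S.
Proof.
move=> Hx; have Hx' := sharpS Hx; rewrite !inE Htr // andbT.
apply/eqP => E; move: Hx; rewrite !inE => /andP [/eqP Hne _]; apply: Hne.
apply/setP => [[a b]]; move/setP: E => /(_ (b, a)); rewrite !inE /= => ->; by rewrite eq_sym.
Qed.

Lemma RowUniq (x y s : {set T * T}) (o b d d' : T) :
  x \in Ssharp S -> y \in S -> Pair x y -> s \in S ->
  (o, b) \in x -> (o, d) \in y -> (o, d') \in y -> (b, d) \in s -> (b, d') \in s -> d = d'.
Proof.
move=> Hx Hy HP Hs Hob Hod Hod' Hbd Hbd'.
case: (s =P diagr T) => [E|sD].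
  by move: Hbd Hbd'; rewrite E !inE /= => /eqP <- /eqP <-.
have Hs' : s \in Ssharp S by rewrite !inE Hs andbT; apply/eqP.
have Htx := trr_sharp Hx.
have Hcard := Heq Htx Hs' b b.
set A := nbhd b (trr x) in Hcard; set B := nbhd b s in Hcard.
have Hsum := dcount A B (fun a e => (a, e) \in y).
set c := #|interset s (trr y) b o|.
have HoA : o \in A by rewrite inE trrE.
have L1 : \sum_(a in A) #|[set e in B | (a, e) \in y]| = #|A| * c.
  rewrite -sum_nat_const; apply: eq_bigr => a Ha.
  rewrite /c -(Hcoh Hs (Htr Hy) (sharpS Htx) (a := b) (c := a)); last by rewrite inE in HoA.
    by apply: eq_card => e; rewrite !inE.
  by rewrite inE in Ha.
have L2 : \sum_(e in B) #|[set a in A | (a, e) \in y]| <= #|B|.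
  rewrite -sum1_card; apply: leq_sum => e He.
  apply/card_le1_eqP => a a'; rewrite !inE /= => /andP [Ha1 Ha2] /andP [Ha1' Ha2'].
  exact: (HP a' a b e).
have Hc : c <= 1.
  have H0 : 0 < #|A| by rewrite card_gt0; apply/set0Pn; exists o.
  by rewrite -(leq_pmul2l H0) muln1 -L1 Hsum Hcard.
move/card_le1_eqP: Hc; apply; by rewrite intE ?Hbd ?Hbd' trrE.
Qed.


Lemma RowTot (x y s : {set T * T}) (o b0 d0 b : T) : x \in S -> y \in S -> s \in S ->
  (o, b0) \in x -> (b0, d0) \in s -> (o, d0) \in y -> (o, b) \in x ->
  exists d, (o, d) \in y /\ (b, d) \in s.
Proof.
move=> Hx Hy Hs H1 H2 H3 H4.
have Hi : d0 \in interset s (trr y) b0 o by rewrite intE H2 trrE H3.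
have E1 : (b0, o) \in trr x by rewrite trrE.
have E2 : (b, o) \in trr x by rewrite trrE.
have [d] := @coh_ne s (trr y) (trr x) b0 o b o d0 Hs (Htr Hy) (Htr Hx) E1 E2 Hi.
by rewrite intE trrE => /andP [Hd1 Hd2]; exists d.
Qed.

Lemma ColTot (x y s : {set T * T}) (o b0 d0 d : T) : x \in S -> y \in S -> s \in S ->
  (o, b0) \in x -> (b0, d0) \in s -> (o, d0) \in y -> (o, d) \in y ->
  exists b, (o, b) \in x /\ (b, d) \in s.
Proof.
move=> Hx Hy Hs H1 H2 H3 H4.
have Hi : b0 \in interset x s o d0 by rewrite intE H1 H2.
have [b] := @coh_ne x s y o d0 o d b0 Hx Hs Hy H3 H4 Hi.
by rewrite intE => /andP [Hd1 Hd2]; exists b.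
Qed.

Lemma BasePiece (x y s : {set T * T}) (o b : T) : x \in S -> y \in S -> s \in S ->
  s \subset compr (trr x) y -> (o, b) \in x -> exists d, (o, d) \in y /\ (b, d) \in s.
Proof.
move=> Hx Hy Hs Hsub Hob.
have [[c d] Hcd] := S_ne Hs.
have := subsetP Hsub _ Hcd; rewrite comprE => /existsP [m /andP [Hcm Hmd]].
have Hi : d \in interset s (trr y) c m by rewrite intE Hcd trrE Hmd.
have E2 : (b, o) \in trr x by rewrite trrE.
have [d'] := @coh_ne s (trr y) (trr x) c m b o d Hs (Htr Hy) (Htr Hx) Hcm E2 Hi.
by rewrite intE trrE => /andP [Hd1 Hd2]; exists d'.
Qed.

Lemma LemL (a b c p q t : {set T * T}) (o al0 xi0 be0 : T) :
  a \in Ssharp S -> b \in S -> c \in Ssharp S -> p \in S -> q \in S -> t \in S ->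
  NoTri a b c -> Pair a b -> Pair a c -> Pair c b ->
  (o, al0) \in a -> (o, xi0) \in c -> (o, be0) \in b ->
  (al0, xi0) \in p -> (xi0, be0) \in q -> (al0, be0) \in t ->
  forall al xi be, (o, al) \in a -> (o, xi) \in c -> (o, be) \in b -> (al, xi) \in p ->
  ((xi, be) \in q <-> (al, be) \in t).
Proof.
move=> Ha Hb Hc Hp Hq Ht HN Hab Hac Hcb Ha0 Hc0 Hb0 Hp0 Hq0 Ht0.
have Ha' := sharpS Ha; have Hc' := sharpS Hc.
have back : forall al xi be, (o, al) \in a -> (o, xi) \in c -> (o, be) \in b ->
    (al, xi) \in p -> (al, be) \in t -> (xi, be) \in q.
  move=> al xi be Hal Hxi Hbe Hpx Htx.
  have Hi : xi0 \in interset p q al0 be0 by rewrite intE Hp0 Hq0.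
  have [xi2] := coh_ne Hp Hq Ht Ht0 Htx Hi.
  rewrite intE => /andP [Hp2 Hq2].
  have Hi1 : o \in interset (trr a) c al0 xi0 by rewrite intE trrE Ha0 Hc0.
  have [a1] := coh_ne (Htr Ha') Hc' Hp Hp0 Hp2 Hi1.
  rewrite intE trrE => /andP [H11 H12].
  have Hi2 : o \in interset (trr c) b xi0 be0 by rewrite intE trrE Hc0 Hb0.
  have [a2] := coh_ne (Htr Hc') Hb Hq Hq0 Hq2 Hi2.
  rewrite intE trrE => /andP [H21 H22].
  have E12 : a1 = a2 := HN a1 o a2 al be xi2 H11 Hal Hbe H22 H12 H21.
  have E1o : a1 = o by apply: (Hab a1 o al be H11 Hal) => //; rewrite E12.
  have Hxi2 : (o, xi2) \in c by rewrite -E1o.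
  by rewrite (RowUniq Ha Hc' Hac Hp Hal Hxi Hxi2 Hpx Hp2).
move=> al xi be Hal Hxi Hbe Hpx; split; last exact: back.
move=> Hqx.
have [be' [Hbe' Htbe']] := RowTot Ha' Hb Ht Ha0 Ht0 Hb0 Hal.
have Hq' := back _ _ _ Hal Hxi Hbe' Hpx Htbe'.
by rewrite (RowUniq Hc Hb Hcb Hq Hxi Hbe Hbe' Hqx Hq').
Qed.


Lemma Core (u v w z s0 s1 s2 t : {set T * T}) (o b0 x0 d0 g0 : T) :
  u \in Ssharp S -> v \in Ssharp S -> w \in Ssharp S -> z \in Ssharp S ->
  s0 \in S -> s1 \in S -> s2 \in S -> t \in S ->
  NoTri u w z -> NoTri w v z -> Pair u w -> Pair w v -> Pair u z -> Pair z w ->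
  Pair w z -> Pair z v ->
  (o, b0) \in u -> (o, x0) \in z -> (o, d0) \in w -> (o, g0) \in v ->
  (b0, x0) \in s0 -> (b0, d0) \in s1 -> (d0, g0) \in s2 -> (x0, g0) \in t ->
  compr (s1 :&: setX (nbhd o u) (nbhd o w)) (s2 :&: setX (nbhd o w) (nbhd o v)) =
  compr (s0 :&: setX (nbhd o u) (nbhd o z)) (t :&: setX (nbhd o z) (nbhd o v)).
Proof.
move=> Hu Hv Hw Hz Hs0 Hs1 Hs2 Ht HN1 HN2 Puw Pwv Puz Pzw Pwz Pzv
  Hob0 Hox0 Hod0 Hog0 Hbx Hbd Hdg Hxg.
have Hu' := sharpS Hu; have Hv' := sharpS Hv; have Hw' := sharpS Hw; have Hz' := sharpS Hz.
have [e He Hxd] := cls (x0, d0).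
have L1 := LemL Hu Hw' Hz Hs0 He Hs1 HN1 Puw Puz Pzw Hob0 Hox0 Hod0 Hbx Hxd Hbd.
have Hdx : (d0, x0) \in trr e by rewrite trrE.
have L2 := LemL Hw Hv' Hz (Htr He) Ht Hs2 HN2 Pwv Pwz Pzv Hod0 Hox0 Hog0 Hdx Hxg Hdg.
apply/setP => [[be ga]]; rewrite !comprE; apply/existsP/existsP => [[d]|[xi]].
  rewrite !inE /= => /andP [/andP [H1 /andP [Hbu Hdw]] /andP [H2 /andP [_ Hgv]]].
  have [xi [Hxi Hs0x]] := RowTot Hu' Hz' Hs0 Hob0 Hbx Hox0 Hbu.
  have Hxd' : (xi, d) \in e by apply/(L1 be xi d Hbu Hxi Hdw Hs0x).
  have Hdx' : (d, xi) \in trr e by rewrite trrE.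
  have Htg : (xi, ga) \in t by apply/(L2 d xi ga Hdw Hxi Hgv Hdx').
  by exists xi; rewrite !inE /= Hs0x Hbu Hxi Htg Hgv.
rewrite !inE /= => /andP [/andP [H1 /andP [Hbu Hxi]] /andP [H2 /andP [_ Hgv]]].
have [d [Hdw Hs1d]] := RowTot Hu' Hw' Hs1 Hob0 Hbd Hod0 Hbu.
have Hxd' : (xi, d) \in e by apply/(L1 be xi d Hbu Hxi Hdw H1).
have Hdx' : (d, xi) \in trr e by rewrite trrE.
have Hdg' : (d, ga) \in s2 by apply/(L2 d xi ga Hdw Hxi Hgv Hdx').
by exists d; rewrite !inE /= Hs1d Hbu Hdw Hdg' Hgv.
Qed.


Lemma ex_s0 (u z : {set T * T}) (o : T) : u \in Ssharp S -> z \in Ssharp S ->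
  exists s0, s0 \in prodS S (trr u) z.
Proof.
move=> Hu Hz; have [b0 Hb0] := rows Hu o; have [x0 Hx0] := rows Hz o.
have [s Hs Hbx] := cls (b0, x0); exists s; rewrite inE Hs /=.
apply: (sub_compr (Htr (sharpS Hu)) (sharpS Hz) Hs Hbx).
by rewrite comprE; apply/existsP; exists o; rewrite trrE Hb0 Hx0.
Qed.

Lemma Main (u v w z s0 : {set T * T}) (o : T) :
  u \in Ssharp S -> v \in Ssharp S -> w \in Ssharp S -> z \in Ssharp S ->
  NoTri u w z -> NoTri w v z -> Pair u w -> Pair w v -> Pair u z -> Pair z w ->
  Pair w z -> Pair z v ->
  s0 \in prodS S (trr u) z ->
  Sloc3 S o u v w =
  [set compr (s0 :&: setX (nbhd o u) (nbhd o z)) r | r in Sloc S o z v].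
Proof.
move=> Hu Hv Hw Hz HN1 HN2 Puw Pwv Puz Pzw Pwz Pzv.
rewrite inE => /andP [Hs0 Hs0sub].
have Hu' := sharpS Hu; have Hv' := sharpS Hv; have Hw' := sharpS Hw; have Hz' := sharpS Hz.
apply/setP => X; apply/imset2P/imsetP.
  case=> x y /imsetP [s1 Hs1 ->] /imsetP [s2 Hs2 ->] ->.
  move: Hs1 Hs2; rewrite !inE => /andP [Hs1 Hs1sub] /andP [Hs2 Hs2sub].
  have [b0 Hb0] := rows Hu o.
  have [d0 [Hd0 Hbd]] := BasePiece Hu' Hw' Hs1 Hs1sub Hb0.
  have [g0 [Hg0 Hdg]] := BasePiece Hw' Hv' Hs2 Hs2sub Hd0.
  have [x0 [Hx0 Hbx]] := BasePiece Hu' Hz' Hs0 Hs0sub Hb0.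
  have [t Ht Hxg] := cls (x0, g0).
  exists (t :&: setX (nbhd o z) (nbhd o v)).
    apply/imsetP; exists t => //; rewrite inE Ht /=.
    apply: (sub_compr (Htr Hz') Hv' Ht Hxg).
    by rewrite comprE; apply/existsP; exists o; rewrite trrE Hx0 Hg0.
  exact: (Core Hu Hv Hw Hz Hs0 Hs1 Hs2 Ht HN1 HN2 Puw Pwv Puz Pzw Pwz Pzv
     Hb0 Hx0 Hd0 Hg0 Hbx Hbd Hdg Hxg).
case=> r /imsetP [t Ht ->] ->.
move: Ht; rewrite inE => /andP [Ht Htsub].
have [x0 Hx0] := rows Hz o.
have [g0 [Hg0 Hxg]] := BasePiece Hz' Hv' Ht Htsub Hx0.
have [b1 Hb1] := rows Hu o.
have [x1 [Hx1 Hbx1]] := BasePiece Hu' Hz' Hs0 Hs0sub Hb1.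
have [b0 [Hb0 Hbx]] := ColTot Hu' Hz' Hs0 Hb1 Hbx1 Hx1 Hx0.
have [d0 Hd0] := rows Hw o.
have [s1 Hs1 Hbd] := cls (b0, d0).
have [s2 Hs2 Hdg] := cls (d0, g0).
apply: (Imset2spec (x1 := s1 :&: setX (nbhd o u) (nbhd o w))
                   (x2 := s2 :&: setX (nbhd o w) (nbhd o v))).
- apply/imsetP; exists s1 => //; rewrite inE Hs1 /=.
  apply: (sub_compr (Htr Hu') Hw' Hs1 Hbd).
  by rewrite comprE; apply/existsP; exists o; rewrite trrE Hb0 Hd0.
- apply/imsetP; exists s2 => //; rewrite inE Hs2 /=.
  apply: (sub_compr (Htr Hw') Hv' Hs2 Hdg).
  by rewrite comprE; apply/existsP; exists o; rewrite trrE Hd0 Hg0.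
- symmetry.
  exact: (Core Hu Hv Hw Hz Hs0 Hs1 Hs2 Ht HN1 HN2 Puw Pwv Puz Pzw Pwz Pzv
     Hb0 Hx0 Hd0 Hg0 Hbx Hbd Hdg Hxg).
Qed.


Lemma PartR (u v z s0 : {set T * T}) (o : T) :
  u \in Ssharp S -> v \in Ssharp S -> z \in Ssharp S -> Pair u z ->
  s0 \in prodS S (trr u) z ->
  partition [set compr (s0 :&: setX (nbhd o u) (nbhd o z)) r | r in Sloc S o z v]
            (setX (nbhd o u) (nbhd o v)).
Proof.
move=> Hu Hv Hz Puz.
rewrite inE => /andP [Hs0 Hs0sub].
have Hu' := sharpS Hu; have Hv' := sharpS Hv; have Hz' := sharpS Hz.
apply/and3P; split.
- apply/eqP/setP => [[be ga]]; apply/bigcupP/idP.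
    case=> B /imsetP [r /imsetP [t Ht ->] ->].
    rewrite comprE => /existsP [xi]; rewrite !inE /=.
    by case/andP => /andP [_ /andP [-> _]] /andP [_ /andP [_ ->]].
  rewrite !inE /= => /andP [Hbu Hgv].
  have [xi [Hxi Hbx]] := BasePiece Hu' Hz' Hs0 Hs0sub Hbu.
  have [t Ht Hxg] := cls (xi, ga).
  have Htp : t \in prodS S (trr z) v.
    rewrite inE Ht /=; apply: (sub_compr (Htr Hz') Hv' Ht Hxg).
    by rewrite comprE; apply/existsP; exists o; rewrite trrE Hxi Hgv.
  exists (compr (s0 :&: setX (nbhd o u) (nbhd o z)) (t :&: setX (nbhd o z) (nbhd o v))).
    by apply/imsetP; exists (t :&: setX (nbhd o z) (nbhd o v)) => //; apply/imsetP; exists t.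
  by rewrite comprE; apply/existsP; exists xi; rewrite !inE /= Hbx Hbu Hxi Hxg Hgv.
- apply/trivIsetP => B1 B2 /imsetP [r1 /imsetP [t1 Ht1 ->] ->]
    /imsetP [r2 /imsetP [t2 Ht2 ->] ->] Hne.
  rewrite -setI_eq0; apply/eqP/setP => [[be ga]]; rewrite in_set0 inE.
  apply/negbTE/negP => /andP [].
  rewrite !comprE => /existsP [xi1 H1] /existsP [xi2 H2].
  move: H1 H2; rewrite !inE /=.
  case/andP => /andP [Hb1 /andP [Hbu Hx1]] /andP [Ht1g _].
  case/andP => /andP [Hb2 /andP [_ Hx2]] /andP [Ht2g _].
  have E := RowUniq Hu Hz' Puz Hs0 Hbu Hx1 Hx2 Hb1 Hb2.
  rewrite -E in Ht2g.
  move: Ht1 Ht2; rewrite !inE => /andP [Ht1 _] /andP [Ht2 _].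
  by move: Hne; rewrite (cls_uniq Ht1 Ht2 Ht1g Ht2g) eqxx.
- apply/imsetP => [[r /imsetP [t Ht ->] E]].
  move: Ht; rewrite inE => /andP [Ht Htsub].
  have [x0 Hx0] := rows Hz o.
  have [g0 [Hg0 Hxg]] := BasePiece Hz' Hv' Ht Htsub Hx0.
  have [b1 Hb1] := rows Hu o.
  have [x1 [Hx1 Hbx1]] := BasePiece Hu' Hz' Hs0 Hs0sub Hb1.
  have [b0 [Hb0 Hbx]] := ColTot Hu' Hz' Hs0 Hb1 Hbx1 Hx1 Hx0.
  have : (b0, g0) \in (set0 : {set T * T}).
    by rewrite E comprE; apply/existsP; exists x0; rewrite !inE /= Hbx Hb0 Hx0 Hxg Hg0.
  by rewrite inE.
Qed.

End Pf.

Theorem lemma4p3 (T : finType) (S : {set {set T * T}}) (a0 : T)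
  (u v : {set T * T}) :
  is_scheme S -> equivalenced S ->
  u \in Ssharp S -> v \in Ssharp S ->
  (forall w w', w \in Dsplit S u v -> w' \in Dsplit S u v ->
     \bigcap_(a in [set u; v]) \bigcap_(b in [set w; w']) Dsplit S a b != set0) ->
  (forall w, w \in Dsplit S u v ->
     partition (Sloc3 S a0 u v w) (setX (nbhd a0 u) (nbhd a0 v))) /\
  (forall w w', w \in Dsplit S u v -> w' \in Dsplit S u v ->
     Sloc3 S a0 u v w = Sloc3 S a0 u v w').
Proof.
move=> [[Hpart _ Htr Hcoh] _] Heq Hu Hv HA.
have Hu' := sharpS Hu; have Hv' := sharpS Hv.
have Dsh : forall a b w, w \in Dsplit S a b -> w \in Ssharp S.
  by move=> a b w; rewrite inE => /andP [].
have getz : forall w w', w \in Dsplit S u v -> w' \in Dsplit S u v -> exists z,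
    [/\ z \in Dsplit S u w, z \in Dsplit S v w, z \in Dsplit S u w' & z \in Dsplit S v w'].
  move=> w w' Hw Hw'; case/set0Pn: (HA w w' Hw Hw') => z /bigcapP Hz.
  have Hzu := bigcapP (Hz u (set21 u v)); have Hzv := bigcapP (Hz v (set22 u v)).
  exists z; split.
  - exact: Hzu w (set21 w w').
  - exact: Hzv w (set21 w w').
  - exact: Hzu w' (set22 w w').
  - exact: Hzv w' (set22 w w').
have Key : forall w z s0, w \in Dsplit S u v -> z \in Dsplit S u w -> z \in Dsplit S v w ->
    s0 \in prodS S (trr u) z ->
    Sloc3 S a0 u v w =
    [set compr (s0 :&: setX (nbhd a0 u) (nbhd a0 z)) r | r in Sloc S a0 z v].
  move=> w z s0 Hw Hzu Hzv Hs0.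
  have Hws := Dsh _ _ _ Hw; have Hzs := Dsh _ _ _ Hzu; have Hw'' := sharpS Hws.
  have N0 := D_NoTri Hpart Htr Hcoh Hu' Hv' Hw.
  have N1 := D_NoTri Hpart Htr Hcoh Hu' Hw'' Hzu.
  have N2 := D_NoTri Hpart Htr Hcoh Hv' Hw'' Hzv.
  have N2' := NoTri_sym N2.
  have Puw := NoTri_Pair1 Hpart Heq Hv N0.
  have Pvw := NoTri_Pair2 Hpart Heq Hu N0.
  have Puz := NoTri_Pair1 Hpart Heq Hws N1.
  have Pwz := NoTri_Pair2 Hpart Heq Hu N1.
  have Pvz := NoTri_Pair1 Hpart Heq Hws N2.
  exact: (Main Hpart Htr Hcoh Heq a0 Hu Hv Hws Hzs N1 N2' Puw (Pair_sym Pvw) Puz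
    (Pair_sym Pwz) Pwz (Pair_sym Pvz) Hs0).
split.
  move=> w Hw.
  have [z [Hzu Hzv _ _]] := getz w w Hw Hw.
  have Hzs := Dsh _ _ _ Hzu.
  have [s0 Hs0] := ex_s0 Hpart Htr Hcoh Heq a0 Hu Hzs.
  rewrite (Key w z s0 Hw Hzu Hzv Hs0).
  have N1 := D_NoTri Hpart Htr Hcoh Hu' (sharpS (Dsh _ _ _ Hw)) Hzu.
  have Puz := NoTri_Pair1 Hpart Heq (Dsh _ _ _ Hw) N1.
  exact: (PartR Hpart Htr Hcoh Heq a0 Hu Hv Hzs Puz Hs0).
move=> w w' Hw Hw'.
have [z [Hzu Hzv Hzu' Hzv']] := getz w w' Hw Hw'.
have Hzs := Dsh _ _ _ Hzu.
have [s0 Hs0] := ex_s0 Hpart Htr Hcoh Heq a0 Hu Hzs.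
by rewrite (Key w z s0 Hw Hzu Hzv Hs0) (Key w' z s0 Hw' Hzu' Hzv' Hs0).
Qed.
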